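(* Let $n\ge 2$, $p\ge 1$, $N\ge 1$, and let $\mathbf{x}=\{x_1,\dots,x_n\}$ be a sample of $p$-variate functions observed at $N$ time points $t_1,\dots,t_N$, i.e. real numbers $x_i^j(t_k)$ for $i=1,\dots,n$, $j=1,\dots,p$, $k=1,\dots,N$. Let $U=\mathbf{MEI}_d(\mathbf{x})$ and $V=\mathbf{MBD}_d(\mathbf{x})$ (the $n\times p$ matrices defined in the context), with rows $u_1,\dots,u_n$ and $v_1,\dots,v_n$ regarded as vectors in $\mathbb{R}^p$. Define $g_n:[0,1]\to\mathbb{R}$ by $$g_n(z)=\frac{2}{n}+z-\frac{n}{2(n-1)}\,z^2 .$$ (a) Suppose that for every $j\in\{1,\dots,p\}$, every $i\neq h$ in $\{1,\dots,n\}$ and every $k_1,k_2\in\{1,\dots,N\}$, $$\big(x_i^j(t_{k_1})-x_h^j(t_{k_1})\big)\big(x_i^j(t_{k_2})-x_h^j(t_{k_2})\big)>0 .$$ Then for every $i=1,\dots,n$, $$MBD_{\{u_1,\dots,u_n\}}(u_i)\;\le\; g_n\!\left(1-MEI_{\{v_1,\dots,v_n\}}(v_i)\right).$$ (b) If, in addition to the hypothesis of (a), for every $k\in\{1,\dots,N\}$, every $i\neq h$ and every $j\neq \ell$ in $\{1,\dots,p\}$, $$\big(x_i^j(t_{k})-x_h^j(t_{k})\big)\big(x_i^\ell(t_{k})-x_h^\ell(t_{k})\big)>0,$$ then for every $i=1,\dots,n$, $$MBD_{\{u_1,\dots,u_n\}}(u_i)\;=\; g_n\!\left(1-MEI_{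\{v_1,\dots,v_n\}}(v_i)\right).$$
   Context: Discrete modified band depth and modified epigraph index: for vectors $y_1,\dots,y_n\in\mathbb{R}^m$ (viewed as functions on the index set $\{1,\dots,m\}$) and $y\in\{y_1,\dots,y_n\}$, $$MBD_{\{y_1,\dots,y_n\}}(y)=\binom{n}{2}^{-1}\sum_{1\le a<b\le n}\frac{1}{m}\,\#\big\{k\in\{1,\dots,m\}:\ \min(y_a(k),y_b(k))\le y(k)\le \max(y_a(k),y_b(k))\big\},$$ $$MEI_{\{y_1,\dots,y_n\}}(y)=\frac{1}{n}\sum_{a=1}^{n}\frac{1}{m}\,\#\big\{k\in\{1,\dots,m\}:\ y_a(k)\ge y(k)\big\}.$$ For the sample $\mathbf{x}$, for each dimension $j$ let $x_i^j=(x_i^j(t_1),\dots,x_i^j(t_N))\in\mathbb{R}^N$. The $n\times p$ matrices $\mathbf{MBD}_d(\mathbf{x})$ and $\mathbf{MEI}_d(\mathbf{x})$ have entries $\mathbf{MBD}_d(\mathbf{x})_{ij}=MBD_{\{x_1^j,\dots,x_n^j\}}(x_i^j)$ and $\mathbf{MEI}_d(\mathbf{x})_{ij}=MEI_{\{x_1^j,\dots,x_n^j\}}(x_i^j)$ (depths computed within each dimension $j$ over the $N$ time points). The depths $MBD_{\{u_1,\dots,u_n\}}$ and $MEI_{\{v_1,\dots,v_n\}}$ in the claim are then computed on the rows of these matrices, treated as vectors indexed by $j=1,\dots,p$. *)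

(* Defs.v *)
From mathcomp Require Import all_boot all_order all_algebra.
Set Implicit Arguments. Unset Strict Implicit. Unset Printing Implicit Defensive.
Import Order.TTheory GRing.Theory Num.Theory.
Local Open Scope ring_scope.

Definition MBD (R : realFieldType) (n m : nat) (y : 'I_n -> 'I_m -> R)
    (i : 'I_n) : R :=
  ('C(n, 2)%:R)^-1 *
  \sum_(a < n) \sum_(b < n | (a < b)%N)
     (#|[set k : 'I_m | (Num.min (y a k) (y b k) <= y i k)
                         && (y i k <= Num.max (y a k) (y b k))]|%:R / m%:R).

Definition MEI (R : realFieldType) (n m : nat) (y : 'I_n -> 'I_m -> R)
    (i : 'I_n) : R :=
  (n%:R)^-1 *
  \sum_(a < n) (#|[set k : 'I_m | y i k <= y a k]|%:R / m%:R).

(* Sample: x i j k = x_i^j(t_k), i < n observations, j < p dimensions,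
   k < N time points.  The n x p matrices MBD_d(x) and MEI_d(x), as the
   functions giving their rows (row i : 'I_p -> R). *)
Definition MBD_d (R : realFieldType) (n p N : nat)
    (x : 'I_n -> 'I_p -> 'I_N -> R) : 'I_n -> 'I_p -> R :=
  fun i j => MBD (fun a k => x a j k) i.

Definition MEI_d (R : realFieldType) (n p N : nat)
    (x : 'I_n -> 'I_p -> 'I_N -> R) : 'I_n -> 'I_p -> R :=
  fun i j => MEI (fun a k => x a j k) i.

Definition g_n (R : realFieldType) (n : nat) (z : R) : R :=
  2 / n%:R + z - n%:R / (2 * (n%:R - 1)) * z ^+ 2.

(* Main.v *)
Require Import Defs.
From mathcomp Require Import all_boot all_order all_algebra.
From mathcomp Require Import zify ring lra.
Set Implicit Arguments. Unset Strict Implicit. Unset Printing Implicit Defensive.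
Import Order.TTheory GRing.Theory Num.Theory.
Local Open Scope ring_scope.

Lemma card_sumR (R : realFieldType) (I : finType) (P : pred I) :
  (#|[set j | P j]|%:R : R) = \sum_j (P j)%:R.
Proof.
rewrite -sum1_card natr_sum big_mkcond /=; apply: eq_bigr => j _.
by rewrite inE; case: (P j).
Qed.

Lemma card_sumN (I : finType) (P : pred I) :
  #|[set j | P j]| = (\sum_j (P j : nat))%N.
Proof.
rewrite -sum1_card big_mkcond /=; apply: eq_bigr => j _.
by rewrite inE; case: (P j).
Qed.

Lemma bin2R (R : realFieldType) n : ('C(n, 2)%:R : R) = n%:R * (n%:R - 1) / 2.
Proof.
have H : (2 * 'C(n, 2) = n * n.-1)%N.
  elim: n => [|n IH] //; rewrite binS bin1 mulnDr IH; case: n {IH} => //= n; lia.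
apply: (@mulfI _ 2); first by rewrite pnatr_eq0.
rewrite -[2 * _]natrM H mulrC divfK ?pnatr_eq0 //.
case: n {H} => [|n] /=; first by rewrite mul0r.
by rewrite natrM -addn1 natrD addrK.
Qed.

Lemma tri_sum (R : realFieldType) n (G : 'I_n -> 'I_n -> R) :
  \sum_(a < n) \sum_(b < n | (a < b)%N) (G a b + G b a) =
  \sum_(a < n) \sum_(b < n) G a b - \sum_(a < n) G a a.
Proof.
under eq_bigr => a _ do rewrite big_split /=.
rewrite big_split /=.
have -> : \sum_(a < n) \sum_(b < n | (a < b)%N) G b a =
          \sum_(a < n) \sum_(b < n | (b < a)%N) G a b.
  rewrite (eq_bigr (fun a : 'I_n => \sum_(b < n) (if (a < b)%N then G b a else 0))); last first.
    by move=> a _; rewrite big_mkcond.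
  rewrite exchange_big /=; apply: eq_bigr => a _; rewrite [RHS]big_mkcond.
  by apply: eq_bigr.
rewrite -big_split -sumrB /=; apply: eq_bigr => a _.
apply/eqP; rewrite eq_sym subr_eq; apply/eqP.
rewrite (bigID (fun b : 'I_n => (a < b)%N)) /= -addrA; congr (_ + _).
rewrite (bigD1 a) ?ltnn //= addrC; congr (_ + _); apply: eq_bigl => b.
by rewrite -leqNgt leq_eqVlt eq_sym -val_eqE /=; case: (ltngtP a b).
Qed.

Lemma count_int n lo hi : (0 < lo)%N -> (lo <= hi.+1)%N ->
  (\sum_(t < n) ((lo <= t.+1 <= hi) : nat) = minn n hi - minn n lo.-1)%N.
Proof.
move=> h1 h2; elim: n => [|n IH]; first by rewrite big_ord0; lia.
rewrite big_ord_recr /= IH.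
by case: (leqP lo n.+1) => ?; case: (leqP n.+1 hi) => ? /=; lia.
Qed.

Lemma quad_equiv n c s : (1 <= c <= n)%N -> (1 <= s <= n)%N ->
  (c * (n.+1 - c) <= (n.+1 - s) * s)%N =
  (minn c (n.+1 - c) <= s <= n.+1 - minn c (n.+1 - c))%N.
Proof.
move=> /andP[c1 c2] /andP[s1 s2].
apply/idP/idP.
- move=> h; apply/andP; split; nia.
- move=> /andP[h1 h2]; nia.
Qed.

Section W.
Variables (R : realFieldType) (n : nat) (w : 'I_n -> R).
Hypothesis winj : injective w.

Definition Bc a := #|[set b | w b <= w a]|.
Definition Ac a := #|[set b | w a <= w b]|.

Lemma ABn a : (Ac a + Bc a = n.+1)%N.
Proof.
rewrite /Ac /Bc -cardUI.
have -> : #|[predU [set b | w a <= w b] & [set b | w b <= w a]]| = n.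
  rewrite -[RHS](card_ord n); apply: eq_card => b; rewrite !inE /=.
  by rewrite le_total.
have -> : #|[predI [set b | w a <= w b] & [set b | w b <= w a]]| = 1%N.
  rewrite -(card1 a); apply: eq_card => b; rewrite !inE /=.
  apply/idP/idP => [/andP[h1 h2]|/eqP->]; last by rewrite lexx.
  by apply/eqP/winj/le_anti; rewrite h1 h2.
by rewrite addn1.
Qed.

Lemma Bmono a b : (Bc a <= Bc b)%N = (w a <= w b).
Proof.
apply/idP/idP => h; last first.
  by apply: subset_leq_card; apply/subsetP => c; rewrite !inE => /le_trans; apply.
apply: contraTT h; rewrite -ltNge => hlt; rewrite -ltnNge.
apply: proper_card; apply/properP; split.
  by apply/subsetP => c; rewrite !inE => /le_trans; apply; apply: ltW.
by exists a; rewrite !inE ?lexx // -ltNge.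
Qed.

Lemma Amono a b : (Ac a <= Ac b)%N = (w b <= w a).
Proof. by rewrite -Bmono; have := ABn a; have := ABn b; lia. Qed.

Lemma Bpos a : (0 < Bc a)%N.
Proof. by apply/card_gt0P; exists a; rewrite inE. Qed.

Lemma Ble a : (Bc a <= n)%N.
Proof. by rewrite -[X in (_ <= X)%N](card_ord n) max_card. Qed.

Lemma between_sum i :
  \sum_(a < n) \sum_(b < n | (a < b)%N)
    ((((w a <= w i) || (w b <= w i)) && ((w i <= w a) || (w i <= w b)))%:R : R)
  = (Ac i * Bc i)%:R - 1.
Proof.
pose G a b : R := ((w a <= w i) && (w i <= w b))%:R.
transitivity (\sum_(a < n) \sum_(b < n | (a < b)%N) (G a b + G b a)).
  apply: eq_bigr => a _; apply: eq_bigr => b hab.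
  have hne : a != b by rewrite -val_eqE /= neq_ltn hab.
  have hX : ~~ (((w a <= w i) && (w i <= w b)) && ((w b <= w i) && (w i <= w a))).
    apply/negP => /andP[/andP[h1 h2] /andP[h3 h4]].
    have e1 : w a = w i by apply: le_anti; rewrite h1 h4.
    have e2 : w b = w i by apply: le_anti; rewrite h3 h2.
    by move/negP: hne; apply; apply/eqP/winj; rewrite e1 e2.
  rewrite /G; move: hX.
  case: (lerP (w a) (w i)) => h1; case: (lerP (w b) (w i)) => h2;
    rewrite ?(ltW h1) ?(ltW h2) ?(lt_geF h1) ?(lt_geF h2) /= => hX;
    rewrite ?addr0 ?add0r ?orbT //;
    by case: (w i <= w b) hX; case: (w i <= w a); rewrite //= ?addr0 ?add0r.
rewrite (tri_sum G).
have -> : \sum_(a < n) G a a = 1.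
  rewrite (bigD1 i) //= big1 ?addr0 /G ?lexx // => a hai.
  case: andP => // -[h1 h2]; move/negP: hai; case; apply/eqP/winj.
  by apply: le_anti; rewrite h1 h2.
congr (_ - _); rewrite mulnC natrM /Bc /Ac !card_sumR big_distrlr /=.
by apply: eq_bigr => a _; apply: eq_bigr => b _; rewrite /G -natrM mulnb.
Qed.

Lemma count_AB i :
  #|[set a | (Ac i * Bc i <= Ac a * Bc a)%N]| = (n.+2 - 2 * minn (Bc i) (Ac i))%N.
Proof.
have hA a : Ac a = (n.+1 - Bc a)%N by have := ABn a; lia.
have hb a : ((Bc a).-1 < n)%N by have := Bpos a; have := Ble a; lia.
pose beta a := Ordinal (hb a).
have binj : injective beta.
  move=> a b /(congr1 val) /= e.
  have e' : Bc a = Bc b by have := Bpos a; have := Bpos b; lia.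
  apply: winj; apply: le_anti; rewrite -!Bmono e' leqnn //.
set c := Bc i.
have hc : (1 <= c <= n)%N by rewrite Bpos Ble.
transitivity #|[set a | (c * (n.+1 - c) <= (n.+1 - (beta a).+1) * (beta a).+1)%N]|.
  apply: eq_card => a; rewrite !inE /= !hA -/c.
  by rewrite (prednK (Bpos a)) [((n.+1 - _) * _)%N]mulnC.
rewrite card_sumN.
pose F (t : 'I_n) : nat := (c * (n.+1 - c) <= (n.+1 - t.+1) * t.+1)%N.
have -> : (\sum_a F (beta a) = \sum_t F t)%N by rewrite [RHS](reindex_inj binj).
rewrite (eq_bigr (fun t : 'I_n => ((minn c (n.+1 - c) <= t.+1 <= n.+1 - minn c (n.+1 - c))%N : nat))); last first.
  move=> t _; rewrite /F quad_equiv //; last by rewrite ltn_ord andbT.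
rewrite count_int; try lia.
by rewrite hA -/c; lia.
Qed.
End W.

Lemma card_const (R : realFieldType) N (b : bool) : (0 < N)%N ->
  (#|[set _ : 'I_N | b]|%:R / N%:R : R) = b%:R.
Proof.
move=> hN; case: b.
  by rewrite cardsT card_ord divff // pnatr_eq0 -lt0n.
by rewrite cards0 mul0r.
Qed.

Lemma sign_same (R : realFieldType) (u v : R) : 0 < u * v -> (u <= 0) = (v <= 0).
Proof. by move=> h; apply/idP/idP => h1; nra. Qed.

Section Y.
Variables (R : realFieldType) (n N : nat) (y : 'I_n -> 'I_N -> R) (k0 : 'I_N).
Hypothesis Hy : forall (i h : 'I_n) (k1 k2 : 'I_N), i != h ->
      0 < (y i k1 - y h k1) * (y i k2 - y h k2).

Definition wy a := y a k0.

Lemma wy_inj : injective wy.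
Proof.
move=> a b e; apply/eqP; apply: contraT => hab.
by have := Hy k0 k0 hab; rewrite /wy in e; rewrite e subrr mul0r ltxx.
Qed.

Lemma cons a b k : (y a k <= y b k) = (wy a <= wy b).
Proof.
case: (eqVneq a b) => [->|hab]; first by rewrite !lexx.
by rewrite -subr_le0 -[RHS]subr_le0; apply: sign_same; apply: Hy.
Qed.

Lemma N_pos : (0 < N)%N.
Proof. by case: N k0 => [[]|]. Qed.

Lemma MEI_y a : MEI y a = (n%:R)^-1 * (Ac wy a)%:R.
Proof.
rewrite /MEI /Ac card_sumR; congr (_ * _); apply: eq_bigr => b _.
rewrite (_ : [set k | y a k <= y b k] = [set _ : 'I_N | wy a <= wy b]).
  exact: card_const N_pos.
by apply/setP => k; rewrite !inE cons.
Qed.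

Lemma MBD_y a : MBD y a = ('C(n, 2)%:R)^-1 * ((Ac wy a * Bc wy a)%:R - 1).
Proof.
rewrite /MBD -(between_sum wy_inj); congr (_ * _).
apply: eq_bigr => b _; apply: eq_bigr => c _.
rewrite (_ : [set k | _] = [set _ : 'I_N | ((wy b <= wy a) || (wy c <= wy a)) &&
    ((wy a <= wy b) || (wy a <= wy c))]).
  exact: card_const N_pos.
by apply/setP => k; rewrite !inE ge_min le_max !cons.
Qed.
End Y.

Lemma alg_id (R : realFieldType) (n A B : nat) : (2 <= n)%N -> (A + B = n.+1)%N ->
  (('C(n, 2)%:R)^-1 * ((A * B)%:R - 1) : R) =
  g_n n (1 - (n%:R)^-1 * (n.+2 - 2 * minn B A)%:R).
Proof.
move=> hn hAB; pose m := minn B A.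
have hm : (A * B = m * (n.+1 - m))%N.
  rewrite /m; case: (leqP B A) => h.
    have -> : A = (n.+1 - B)%N by lia.
    by rewrite mulnC.
  by have -> : B = (n.+1 - A)%N by lia.
have m1 : (2 * m <= n.+2)%N by rewrite /m; lia.
have m2 : (m <= n.+1)%N by rewrite /m; lia.
rewrite hm natrM !natrB // natrM bin2R /g_n.
have n0 : (n%:R : R) != 0 by rewrite pnatr_eq0; lia.
have n1 : (n%:R - 1 : R) != 0.
  by rewrite subr_eq0 pnatr_eq1; lia.
rewrite -[n.+2]addn2 -[n.+1]addn1 !natrD.
by rewrite -/m; field; rewrite n0 n1.
Qed.

Lemma jensen (R : realFieldType) (n p : nat) (z : 'I_p -> R) : (2 <= n)%N -> (1 <= p)%N ->
  (p%:R)^-1 * \sum_j g_n n (z j) <= g_n n ((p%:R)^-1 * \sum_j z j).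
Proof.
move=> hn hp.
set P : R := p%:R; set S1 := \sum_j z j; set S2 := \sum_j z j ^+ 2.
have P0 : 0 < P by rewrite ltr0n; lia.
set mu := P^-1 * S1.
have hS1 : S1 = P * mu by rewrite /mu mulrA divff ?mul1r // gt_eqF.
have H0 : 0 <= \sum_j (z j - mu) ^+ 2 by apply: sumr_ge0 => j _; apply: sqr_ge0.
have H1 : \sum_j (z j - mu) ^+ 2 = S2 - 2 * mu * S1 + P * mu ^+ 2.
  transitivity (\sum_j (z j ^+ 2 - 2 * mu * z j + mu ^+ 2)).
    by apply: eq_bigr => j _; ring.
  rewrite big_split /= sumrB -mulr_sumr sumr_const card_ord -/S1 -/S2 /P; ring.
have H2 : \sum_j g_n n (z j) = P * (2 / n%:R) + S1 - n%:R / (2 * (n%:R - 1)) * S2.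
  rewrite /g_n /S1 /S2 mulr_sumr sumrB big_split /= sumr_const card_ord /P; ring.
have kap : 0 <= (n%:R : R) / (2 * (n%:R - 1)).
  apply: divr_ge0; first by rewrite ler0n.
  apply: mulr_ge0; first by [].
  by rewrite subr_ge0 ler1n; lia.
rewrite -/mu H2 /g_n.
set a := 2 / (n%:R : R); set k := (n%:R : R) / (2 * (n%:R - 1)).
have hS2 : P * mu ^+ 2 <= S2 by rewrite hS1 in H1; nra.
have PN : P != 0 by rewrite gt_eqF.
have e : P^-1 * (P * a + S1 - k * S2) = a + mu - k * (P^-1 * S2).
  by rewrite /mu; field.
rewrite e.
have h3 : mu ^+ 2 <= P^-1 * S2.
  by rewrite mulrC ler_pdivlMr // mulrC.
have h4 : k * mu ^+ 2 <= k * (P^-1 * S2) by apply: ler_wpM2l.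
lra.
Qed.

Theorem proposition1 (R : realFieldType) (n p N : nat)
    (x : 'I_n -> 'I_p -> 'I_N -> R) :
  (2 <= n)%N -> (1 <= p)%N -> (1 <= N)%N ->
  (forall (j : 'I_p) (i h : 'I_n) (k1 k2 : 'I_N), i != h ->
      0 < (x i j k1 - x h j k1) * (x i j k2 - x h j k2)) ->
  (forall i : 'I_n,
      MBD (MEI_d x) i <= g_n n (1 - MEI (MBD_d x) i))
  /\
  ((forall (k : 'I_N) (i h : 'I_n) (j l : 'I_p), i != h -> j != l ->
      0 < (x i j k - x h j k) * (x i l k - x h l k)) ->
   forall i : 'I_n,
      MBD (MEI_d x) i = g_n n (1 - MEI (MBD_d x) i)).
Proof.
move=> hn hp hN Ha.
pose k0 : 'I_N := Ordinal hN.
pose y (j : 'I_p) : 'I_n -> 'I_N -> R := fun a k => x a j k.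
have Hy j : forall (i h : 'I_n) (k1 k2 : 'I_N), i != h ->
    0 < (y j i k1 - y j h k1) * (y j i k2 - y j h k2).
  by move=> i h k1 k2 hih; apply: Ha.
pose w j := wy (y j) k0.
have winj j : injective (w j) := @wy_inj R n N (y j) k0 (Hy j).
have hMEI j a : MEI_d x a j = (n%:R)^-1 * (Ac (w j) a)%:R.
  exact: (@MEI_y R n N (y j) k0 (Hy j) a).
have hMBD j a : MBD_d x a j = ('C(n, 2)%:R)^-1 * ((Ac (w j) a * Bc (w j) a)%:R - 1).
  exact: (@MBD_y R n N (y j) k0 (Hy j) a).
have n0 : (0 : R) < (n%:R)^-1 by rewrite invr_gt0 ltr0n; lia.
have C0 : (0 : R) < ('C(n, 2)%:R)^-1 by rewrite invr_gt0 ltr0n bin_gt0.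
have P0 : (0 : R) < p%:R by rewrite ltr0n.
have hU i : MBD (MEI_d x) i = (p%:R)^-1 * \sum_j MBD_d x i j.
  under [in RHS]eq_bigr => j _ do rewrite hMBD -(between_sum (winj j)).
  rewrite /MBD -mulr_sumr mulrCA; congr (_ * _).
  transitivity (\sum_(a < n) \sum_(b < n | (a < b)%N) ((p%:R)^-1 * \sum_(j < p)
     ((((w j a <= w j i) || (w j b <= w j i)) && ((w j i <= w j a) || (w j i <= w j b)))%:R : R))).
    apply: eq_bigr => a _; apply: eq_bigr => b _; rewrite card_sumR mulrC; congr (_ * _).
    apply: eq_bigr => j _; rewrite ge_min le_max !hMEI !ler_pM2l // !ler_nat !Amono //.
    by rewrite andbC.
  rewrite [in RHS]exchange_big mulr_sumr; apply: eq_bigr => a _.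
  by rewrite [in RHS]exchange_big mulr_sumr.
have hM i : MEI (MBD_d x) i = (p%:R)^-1 * \sum_j ((n%:R)^-1 *
      #|[set a | MBD_d x i j <= MBD_d x a j]|%:R).
  rewrite /MEI -mulr_sumr mulrCA; congr (_ * _).
  under eq_bigr => a _ do rewrite card_sumR mulrC.
  rewrite -mulr_sumr; congr (_ * _).
  under [in RHS]eq_bigr => j _ do rewrite card_sumR.
  by rewrite exchange_big.
pose z i j := 1 - (n%:R)^-1 * (#|[set a | MBD_d x i j <= MBD_d x a j]|%:R : R).
have hK i j : MBD_d x i j = g_n n (z i j).
  rewrite /z (_ : [set a | _] = [set a | (Ac (w j) i * Bc (w j) i <= Ac (w j) a * Bc (w j) a)%N]).
    by rewrite count_AB // hMBD; apply: alg_id => //; apply: ABn.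
  by apply/setP => a; rewrite !inE !hMBD ler_pM2l // lerD2r ler_nat.
have hZ i : 1 - MEI (MBD_d x) i = (p%:R)^-1 * \sum_j z i j.
  rewrite hM /z sumrB sumr_const card_ord.
  have PN : (p%:R : R) != 0 by rewrite gt_eqF.
  by field.
split.
  move=> i; rewrite hU hZ; under eq_bigr => j _ do rewrite hK.
  exact: jensen.
move=> Hb i.
have hw a j l : Ac (w j) a = Ac (w l) a /\ Bc (w j) a = Bc (w l) a.
  have e b : (w j b <= w j a) = (w l b <= w l a).
    case: (eqVneq b a) => [->|hba]; first by rewrite !lexx.
    case: (eqVneq j l) => [->//|hjl].
    rewrite /w /wy /y -subr_le0 -[RHS]subr_le0; apply: sign_same; exact: Hb.
  have e' b : (w j a <= w j b) = (w l a <= w l b).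
    case: (eqVneq b a) => [->|hba]; first by rewrite !lexx.
    case: (eqVneq j l) => [->//|hjl].
    rewrite /w /wy /y -subr_le0 -[RHS]subr_le0; apply: sign_same; apply: Hb; rewrite // eq_sym; exact: hba.
  split; apply: eq_card => b; by rewrite !inE.
have hv a j l : MBD_d x a j = MBD_d x a l.
  by rewrite !hMBD; case: (hw a j l) => -> ->.
pose j0 : 'I_p := Ordinal hp.
have hz j : z i j = z i j0.
  rewrite /z; congr (1 - _ * _%:R); apply: eq_card => a.
  by rewrite !inE (hv i j j0) (hv a j j0).
rewrite hU hZ; under eq_bigr => j _ do rewrite hK hz.
under [X in g_n n (_ * X)]eq_bigr => j _ do rewrite hz.
have PN : (p%:R : R) != 0 by rewrite gt_eqF.
by rewrite !sumr_const card_ord -[g_n n (z i j0) *+ p]mulr_natl -[z i j0 *+ p]mulr_natl !mulKf.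
Qed.
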